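(* A finite poset $P$ is a c.i.-poset if and only if it does not contain any of the following three posets as an induced subposet: $P_1$: four elements $a,b,c,d$ with $c<b<a$ and $c<d$, and no other relations (so $d$ is incomparable to $a$ and $b$); $P_2$: five elements $e,f,g,h,i$ with $f<e$, $f<g$, $h<g$, $h<i$, and no other relations; $P_3$: four elements, three pairwise incomparable elements each lying above a common fourth element, and no other relations.
   Context: A poset $Q$ is an induced subposet of $P$ if there is an injective map $\iota:Q\to P$ with $\iota(q)\le_P\iota(q')$ if and only if $q\le_Qq'$. For a finite poset $P$, a connected order ideal is a nonempty downward-closed subset whose induced Hasse diagram is connected; $\mathcal{J}_{\mathrm{conn}}(P)$ is the set of these; two connected order ideals intersect nontrivially if they are neither disjoint nor nested, and $\Pi(P)$ is the set of such unordered pairs. $P$ is a c.i.-poset if $|\mathcal{J}_{\mathrm{conn}}(P)|-|\Pi(P)|=|P|$; equivalently, for any field $k$, the presentation of the ring $R_P$ (the span in $k[x_p:p\in P]$ of the monomials $\prod_px_p^{f(p)}$ over $f:P\to\mathbb{N}$ weakly order-reversing) as a quotient of $k[U_J]_{J\in\mathcal{J}_{\mathrm{conn}}(P)}$ via $U_J\mapsto\prod_{p\in J}x_p$ is a complete intersection presentation. *)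

(* Defs.v *)
From HB Require Import structures.
From mathcomp Require Import all_boot all_order all_algebra.
Set Implicit Arguments. Unset Strict Implicit. Unset Printing Implicit Defensive.
Import Order.TTheory GRing.Theory Num.Theory.
Local Open Scope order_scope.

Section PosetDefs.
Context {disp : Order.disp_t} {P : finPOrderType disp}.

Definition covers (x y : P) : bool :=
  (x < y) && ~~ [exists z : P, (x < z) && (z < y)].

Definition order_ideal (J : {set P}) : bool :=
  [forall x : P, forall y : P, (y \in J) && (x <= y) ==> (x \in J)].

Definition hasse_in (J : {set P}) : rel P :=
  [rel x y | [&& x \in J, y \in J & covers x y || covers y x]].

Definition hasse_connected (J : {set P}) : bool :=
  [forall x in J, forall y in J, connect (hasse_in J) x y].

Definition Jconn : {set {set P}} :=
  [set J : {set P} | [&& J != set0, order_ideal J & hasse_connected J]].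

Definition intersect_nontrivially (J J' : {set P}) : bool :=
  [&& ~~ [disjoint J & J'], ~~ (J \subset J') & ~~ (J' \subset J)].

Definition Pi : {set {set {set P}}} :=
  [set [set J; J'] | J in Jconn, J' in [set J' in Jconn | intersect_nontrivially J J']].

End PosetDefs.

Definition ci_poset {disp : Order.disp_t} (P : finPOrderType disp) : Prop :=
  ((Posz #|@Jconn disp P| - Posz #|@Pi disp P|)%R = Posz #|P|).

Definition induced_subposet (Q : finType) (leQ : rel Q)
  {disp : Order.disp_t} (P : finPOrderType disp) : Prop :=
  exists iota : Q -> P, injective iota /\
    forall q q' : Q, (iota q <= iota q') = leQ q q'.

(* P1: a=0, b=1, c=2, d=3 with c<b<a, c<d *)
Definition leP1 : rel 'I_4 :=
  fun i j => (i == j) || ((val i, val j) \in [:: (2,1); (2,0); (1,0); (2,3)]%N).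
(* P2: e=0, f=1, g=2, h=3, i=4 with f<e, f<g, h<g, h<i *)
Definition leP2 : rel 'I_5 :=
  fun i j => (i == j) || ((val i, val j) \in [:: (1,0); (1,2); (3,2); (3,4)]%N).
Definition leP3 : rel 'I_4 :=
  fun i j => (i == j) || ((val i, val j) \in [:: (0,1); (0,2); (0,3)]%N).

(* Main.v *)
Require Import Defs.
From HB Require Import structures.
From mathcomp Require Import all_boot all_order all_algebra.
Set Implicit Arguments. Unset Strict Implicit. Unset Printing Implicit Defensive.
Import Order.POrderTheory.
Local Open Scope order_scope.

Section S.
Context {disp : Order.disp_t} {P : finPOrderType disp}.
Implicit Types (x y z : P) (J A B U : {set P}).

Definition down x : {set P} := [set y | y <= x].
Definition dset (S : {set P}) : {set P} := [set y | [exists s in S, y <= s]].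
Definition maxin J m := (m \in J) && [forall z in J, (m <= z) ==> (z == m)].
Definition un (p : {set {set P}}) : {set P} := [set x | [exists J in p, x \in J]].

Lemma idealP J : order_ideal J -> forall x y, y \in J -> x <= y -> x \in J.
Proof.
move=> /forallP H x y yJ xy.
by move: (H x) => /forallP /(_ y) /implyP; apply; rewrite yJ xy.
Qed.

Lemma idealI J : (forall x y, y \in J -> x <= y -> x \in J) -> order_ideal J.
Proof.
move=> H; apply/forallP => x; apply/forallP => y; apply/implyP => /andP[].
exact: H.
Qed.

Lemma hasse_sym J : symmetric (hasse_in J).
Proof. by move=> x y; rewrite /hasse_in /= andbCA orbC. Qed.

Lemma covers_lt x y : covers x y -> x < y.
Proof. by case/andP. Qed.

Lemma conn_le J : order_ideal J -> forall x y, x \in J -> y <= x ->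
  connect (hasse_in J) y x.
Proof.
move=> HJ.
suff H : forall n x y, (#|[set z | ((y <= z) && (z <= x))%O]| < n)%N -> x \in J ->
  y <= x -> connect (hasse_in J) y x by move=> x y; exact: H.
elim=> [//|n IH] x y Hn xJ yx; rewrite ltnS in Hn.
have yJ : y \in J by exact: idealP xJ yx.
case: (eqVneq y x) => [-> //|nyx].
have ltyx : y < x by rewrite lt_neqAle nyx yx.
case: (boolP (covers y x)) => cov.
  by apply: connect1; rewrite /hasse_in /= yJ xJ cov.
have : [exists z, (y < z) && (z < x)].
  by move: cov; rewrite /covers ltyx /= negbK.
case/existsP => z /andP[yz zx].
have zJ : z \in J by exact: idealP xJ (ltW zx).
apply: (connect_trans (y := z)).
  apply: IH => //; last exact: ltW.
  apply: leq_trans Hn; apply: proper_card; apply/properP; split.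
    apply/subsetP => w; rewrite !inE => /andP[-> wz] /=; exact: le_trans wz (ltW zx).
  exists x; first by rewrite !inE yx lexx.
  by rewrite !inE; apply/negP => /andP[_ xz]; move: (lt_le_trans zx xz); rewrite ltxx.
apply: IH => //; last exact: ltW.
apply: leq_trans Hn; apply: proper_card; apply/properP; split.
  apply/subsetP => w; rewrite !inE => /andP[zw ->]; rewrite andbT; exact: le_trans (ltW yz) zw.
exists y; first by rewrite !inE yx lexx.
by rewrite !inE; apply/negP => /andP[zy _]; move: (lt_le_trans yz zy); rewrite ltxx.
Qed.

Lemma ideal_down x : order_ideal (down x).
Proof. by apply: idealI => a b; rewrite !inE => bx ab; apply: le_trans ab bx. Qed.

Lemma Jconn_down x : down x \in Jconn.
Proof.
rewrite inE ideal_down /=; apply/andP; split.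
  by apply/set0Pn; exists x; rewrite inE.
apply/forall_inP => a aD; apply/forall_inP => b bD.
have xD : x \in down x by rewrite inE.
rewrite inE in aD; rewrite inE in bD.
apply: (connect_trans (y := x)); first by apply: conn_le; [exact: ideal_down | exact: xD | exact: aD].
rewrite (sym_connect_sym (@hasse_sym _)).
by apply: conn_le; [exact: ideal_down | exact: xD | exact: bD].
Qed.


Lemma JconnP J : J \in Jconn ->
  [/\ J != set0, order_ideal J & hasse_connected J].
Proof. by rewrite inE => /and3P. Qed.

Lemma nondisj A B x : x \in A -> x \in B -> ~~ [disjoint A & B].
Proof. by move=> xA xB; apply/negP => /disjointFr /(_ xA); rewrite xB. Qed.

Lemma nondisjP A B : ~~ [disjoint A & B] -> exists2 x, x \in A & x \in B.
Proof.
rewrite disjoint_subset => /subsetPn [x xA]; rewrite !inE negbK => xB.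
by exists x.
Qed.

Lemma nsub A B x : x \in A -> x \notin B -> ~~ (A \subset B).
Proof. by move=> xA xB; apply/subsetPn; exists x. Qed.

Lemma hasse_mono J J' : J \subset J' ->
  subrel (connect (hasse_in J)) (connect (hasse_in J')).
Proof.
move=> /subsetP sJ; apply: connect_sub => x y /and3P[xJ yJ c].
by apply: connect1; rewrite /hasse_in /= (sJ _ xJ) (sJ _ yJ).
Qed.

Lemma Jconn_union A B : A \in Jconn -> B \in Jconn -> ~~ [disjoint A & B] ->
  A :|: B \in Jconn.
Proof.
move=> /JconnP[nA iA cA] /JconnP[nB iB cB] /nondisjP[w wA wB].
rewrite inE; apply/and3P; split.
- by apply/set0Pn; exists w; rewrite inE wA.
- apply: idealI => x y; rewrite !inE => /orP[yA|yB] xy.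
    by rewrite (idealP iA yA xy).
  by rewrite (idealP iB yB xy) orbT.
have cA' : forall x y, x \in A -> y \in A -> connect (hasse_in (A :|: B)) x y.
  move=> x y xA yA; apply: (hasse_mono (subsetUl A B)).
  by move: cA => /forall_inP/(_ x xA)/forall_inP/(_ y yA).
have cB' : forall x y, x \in B -> y \in B -> connect (hasse_in (A :|: B)) x y.
  move=> x y xA yA; apply: (hasse_mono (subsetUr A B)).
  by move: cB => /forall_inP/(_ x xA)/forall_inP/(_ y yA).
apply/forall_inP => x; rewrite inE => /orP[xA|xB]; apply/forall_inP => y;
  rewrite inE => /orP[yA|yB]; auto.
- exact: connect_trans (cA' _ _ xA wA) (cB' _ _ wB yB).
- exact: connect_trans (cB' _ _ xB wB) (cA' _ _ wA yA).
Qed.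

Lemma cross J U x y : connect (hasse_in J) x y ->
  (forall a b, b \in U -> a <= b -> a \in U) -> x \in U -> y \notin U ->
  exists u v, [/\ u \in U, v \in J, v \notin U & u < v].
Proof.
case/connectP => p; elim: p x => [|z p IH] x /=.
  by move=> _ -> dU yU yN; rewrite yU in yN.
case/andP => exz pth ly dU xU yN.
case zU: (z \in U); first exact: IH pth ly dU zU yN.
move: exz => /and3P[xJ zJ /orP[c|c]].
  by exists x, z; rewrite zU; split => //; apply: covers_lt.
by move: (dU z x xU (ltW (covers_lt c))); rewrite zU.
Qed.

Lemma exists_max J y : y \in J -> exists m, maxin J m && (y <= m).
Proof.
move=> yJ.
pose S := fun m => (m \in J) && (y <= m).
have Sy : S y by rewrite /S yJ lexx.
case: (arg_maxnP (fun m => #|down m|) Sy) => m /andP[mJ ym] Hm.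
exists m; rewrite ym andbT /maxin mJ /=.
apply/forall_inP => z zJ; apply/implyP => mz; apply/eqP.
have Sz : S z by rewrite /S zJ (le_trans ym mz).
move: (Hm z Sz) => hz; apply/eqP; apply/negP => /negP nz.
have : (#|down m| < #|down z|)%N.
  apply: proper_card; apply/properP; split.
    by apply/subsetP => w; rewrite !inE => wm; apply: le_trans wm mz.
  exists z; rewrite !inE //.
  apply/negP => zm; have e : z = m by apply: le_anti; rewrite zm mz.
  by move: nz; rewrite e eqxx.
by rewrite ltnNge; move: hz => /= ->.
Qed.

Lemma maxinP J m z : maxin J m -> z \in J -> m <= z -> z = m.
Proof.
by case/andP => _ /forall_inP H zJ mz; apply/eqP; move: (H z zJ) => /implyP; apply.
Qed.

Lemma maxin_in J m : maxin J m -> m \in J.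
Proof. by case/andP. Qed.

Lemma dset_down S : (forall a b, b \in dset S -> a <= b -> a \in dset S).
Proof.
move=> a b; rewrite !inE => /exists_inP[s sS bs] ab.
by apply/exists_inP; exists s => //; apply: le_trans ab bs.
Qed.

Lemma dset1 m : dset [set m] = down m.
Proof.
apply/setP => y; rewrite !inE; apply/exists_inP/idP => [[s]|ym].
  by rewrite inE => /eqP ->.
by exists m; rewrite ?inE.
Qed.

Lemma dsetU1 m S : dset (m |: S) = down m :|: dset S.
Proof.
apply/setP => y; rewrite !inE; apply/exists_inP/orP => [[s]|[ym|/exists_inP[s sS ys]]].
- by rewrite !inE => /orP[/eqP ->|sS] ys; [left|right; apply/exists_inP; exists s].
- by exists m; rewrite ?inE ?eqxx.
- by exists s; rewrite ?inE ?sS ?orbT.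
Qed.

Lemma un2 A B : un [set A; B] = A :|: B.
Proof.
apply/setP => x; rewrite !inE; apply/exists_inP/orP => [[C]|[xA|xB]].
  by rewrite !inE => /orP[/eqP->|/eqP->] ->; [left|right].
- by exists A; rewrite ?inE ?eqxx.
- by exists B; rewrite ?inE ?eqxx ?orbT.
Qed.


Lemma cross_max J U x y : J \in Jconn -> U \subset J ->
  (forall a b, b \in U -> a <= b -> a \in U) -> x \in U -> y \in J -> y \notin U ->
  exists u m, [/\ u \in U, maxin J m, u <= m & m \notin U].
Proof.
move=> /JconnP[_ iJ cJ] /subsetP sUJ dU xU yJ yN.
have xJ := sUJ _ xU.
have cxy : connect (hasse_in J) x y.
  by move: cJ => /forall_inP/(_ x xJ)/forall_inP/(_ y yJ).
case: (cross cxy dU xU yN) => u [v [uU vJ vN uv]].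
case: (exists_max vJ) => m /andP[mm vm].
exists u, m; split => //; first exact: le_trans (ltW uv) vm.
by apply/negP => mU; move: (dU _ _ mU vm); rewrite (negbTE vN).
Qed.

Definition Dset : {set {set P}} := [set down x | x in P].
Definition NP : {set {set P}} := Jconn :\: Dset.

Lemma down_inj : injective down.
Proof.
move=> x y e.
have : x \in down y by rewrite -e inE.
have : y \in down x by rewrite e inE.
by rewrite !inE => yx xy; apply: le_anti; rewrite xy yx.
Qed.

Lemma card_Jconn : #|@Jconn _ P| = (#|P| + #|NP|)%N.
Proof.
rewrite -(cardsID Dset (@Jconn _ P)) /NP.
have -> : Jconn :&: Dset = Dset.
  apply/setIidPr/subsetP => J /imsetP[x _ ->]; exact: Jconn_down.
by rewrite card_imset //; exact: down_inj.
Qed.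

Lemma PiP (p : {set {set P}}) : reflect (exists A B, [/\ A \in Jconn, B \in Jconn,
   intersect_nontrivially A B & p = [set A; B]]) (p \in Pi).
Proof.
apply: (iffP imset2P) => [[A B AJ] |[A [B [AJ BJ H ->]]]].
  by rewrite inE => /andP[BJ H] ->; exists A, B.
by apply: (Imset2spec (x1 := A) (x2 := B)) => //; rewrite inE BJ.
Qed.

Lemma un_Pi p : p \in Pi -> un p \in NP.
Proof.
case/PiP => A [B [AJ BJ /and3P[nd nAB nBA] ->]]; rewrite un2.
rewrite inE Jconn_union // andbT.
apply/negP => /imsetP[x _ e].
have xU : x \in A :|: B by rewrite e inE.
have /JconnP[_ iA _] := AJ; have /JconnP[_ iB _] := BJ.
move: xU; rewrite inE => /orP[xA|xB].
  move: nBA => /negP; apply; apply/subsetP => y yB.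
  have : y \in A :|: B by rewrite inE yB orbT.
  by rewrite e inE; apply: idealP xA.
move: nAB => /negP; apply; apply/subsetP => y yA.
have : y \in A :|: B by rewrite inE yA.
by rewrite e inE; apply: idealP xB.
Qed.

Lemma NP_un J : J \in NP -> J \in un @: Pi.
Proof.
rewrite inE => /andP[nD JJ].
have /JconnP[nJ iJ cJ] := JJ.
case/set0Pn: nJ => y0 y0J.
case: (exists_max y0J) => m0 /andP[m0m _].
pose cand := fun S : {set P} => [&& S \subset [set m | maxin J m],
   dset S \in Jconn & dset S != J].
have c0 : cand [set m0].
  rewrite /cand dset1 Jconn_down; apply/and3P; split => //.
    by apply/subsetP => z; rewrite !inE => /eqP ->.
  by apply/negP => /eqP e; move: nD; rewrite -e imset_f.
case: (arg_maxnP (fun S : {set P} => #|S|) c0) => S /and3P[sS dJ dnJ] HS.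
have sdJ : dset S \subset J.
  apply/subsetP => z; rewrite inE => /exists_inP[s sS' zs].
  move/subsetP: sS => /(_ s sS'); rewrite inE => /maxin_in sJ.
  exact: idealP sJ zs.
have /JconnP[/set0Pn[x xS] _ _] := dJ.
have [y yJ yN] : exists2 y, y \in J & y \notin dset S.
  apply/subsetPn; apply/negP => sub; move: dnJ; rewrite eqEsubset sdJ sub //.
case: (cross_max JJ sdJ (dset_down (S:=S)) xS yJ yN) => u [m [uS mm um mN]].
have emJ : dset (m |: S) = J.
  case: (eqVneq (dset (m |: S)) J) => // ne.
  have cS : cand (m |: S).
    apply/and3P; split => //.
      by rewrite subUset sub1set inE mm sS.
    rewrite dsetU1 Jconn_union ?Jconn_down //.
    by apply: (nondisj (x := u)) => //; rewrite inE.
  move: (HS _ cS) => /=; rewrite cardsU1.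
  have -> : m \notin S.
    by apply/negP => mS; move: mN; rewrite inE; move/exists_inP; apply; exists m.
  by rewrite /= add1n ltnn.
apply/imsetP; exists [set down m; dset S]; last by rewrite un2 -dsetU1 emJ.
apply/PiP; exists (down m), (dset S); split => //; first exact: Jconn_down.
apply/and3P; split.
- by apply: (nondisj (x := u)) => //; rewrite inE.
- by apply: (nsub (x := m)) => //; rewrite inE.
move: uS; rewrite inE => /exists_inP[s sS' us].
apply: (nsub (x := s)); first by rewrite inE; apply/exists_inP; exists s.
rewrite inE; apply/negP => sm.
move/subsetP: sS => /(_ s sS'); rewrite inE => sM.
have e := maxinP sM (maxin_in mm) sm.
by move: mN; rewrite inE; move/exists_inP; apply; exists s; rewrite // e.
Qed.

Lemma unPi : un @: Pi = NP.
Proof.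
apply/setP => J; apply/idP/idP; last exact: NP_un.
by case/imsetP => p pP ->; exact: un_Pi.
Qed.


Lemma mk_emb (Q : finType) (leQ : rel Q) (f : Q -> P) :
  (forall q q', leQ q q' -> leQ q' q -> q = q') ->
  (forall q q', (f q <= f q') = leQ q q') -> induced_subposet leQ P.
Proof.
move=> anti H; exists f; split => // q q' e.
by apply: anti; rewrite -H e lexx.
Qed.

Lemma mk3 x y1 y2 y3 : x <= y1 -> x <= y2 -> x <= y3 ->
  ~~ (y1 <= x) -> ~~ (y2 <= x) -> ~~ (y3 <= x) ->
  ~~ (y1 <= y2) -> ~~ (y1 <= y3) -> ~~ (y2 <= y1) -> ~~ (y2 <= y3) ->
  ~~ (y3 <= y1) -> ~~ (y3 <= y2) -> induced_subposet leP3 P.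
Proof.
move=> h1 h2 h3 /negbTE n1 /negbTE n2 /negbTE n3 /negbTE n4 /negbTE n5
  /negbTE n6 /negbTE n7 /negbTE n8 /negbTE n9.
apply: (mk_emb (f := fun q : 'I_4 => nth x [:: x; y1; y2; y3] q)).
  by move=> [[|[|[|[|?]]]] ?] [[|[|[|[|?]]]] ?] //= *; apply: val_inj.
by move=> [[|[|[|[|?]]]] ?] [[|[|[|[|?]]]] ?] //=; rewrite ?lexx ?h1 ?h2 ?h3 ?n1 ?n2 ?n3 ?n4 ?n5 ?n6 ?n7 ?n8 ?n9.
Qed.


Lemma mk1 (a b c d : P) : c <= b -> c <= a -> b <= a -> c <= d ->
  ~~ (a <= b) -> ~~ (a <= c) -> ~~ (a <= d) -> ~~ (b <= c) -> ~~ (b <= d) ->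
  ~~ (d <= a) -> ~~ (d <= b) -> ~~ (d <= c) -> induced_subposet leP1 P.
Proof.
move=> h1 h2 h3 h4 /negbTE n1 /negbTE n2 /negbTE n3 /negbTE n4 /negbTE n5
  /negbTE n6 /negbTE n7 /negbTE n8.
apply: (mk_emb (f := fun q : 'I_4 => nth a [:: a; b; c; d] q)).
  by move=> [[|[|[|[|?]]]] ?] [[|[|[|[|?]]]] ?] //= *; apply: val_inj.
by move=> [[|[|[|[|?]]]] ?] [[|[|[|[|?]]]] ?] //=; rewrite ?lexx ?h1 ?h2 ?h3 ?h4 ?n1 ?n2 ?n3 ?n4 ?n5 ?n6 ?n7 ?n8.
Qed.

Lemma mk2 (e f g h i : P) : f <= e -> f <= g -> h <= g -> h <= i ->
  ~~ (e <= f) -> ~~ (e <= g) -> ~~ (e <= h) -> ~~ (e <= i) ->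
  ~~ (f <= h) -> ~~ (f <= i) ->
  ~~ (g <= e) -> ~~ (g <= f) -> ~~ (g <= h) -> ~~ (g <= i) ->
  ~~ (h <= e) -> ~~ (h <= f) ->
  ~~ (i <= e) -> ~~ (i <= f) -> ~~ (i <= g) -> ~~ (i <= h) ->
  induced_subposet leP2 P.
Proof.
move=> h1 h2 h3 h4 /negbTE n1 /negbTE n2 /negbTE n3 /negbTE n4 /negbTE n5
  /negbTE n6 /negbTE n7 /negbTE n8 /negbTE n9 /negbTE n10 /negbTE n11
  /negbTE n12 /negbTE n13 /negbTE n14 /negbTE n15 /negbTE n16.
apply: (mk_emb (f := fun q : 'I_5 => nth e [:: e; f; g; h; i] q)).
  by move=> [[|[|[|[|[|?]]]]] ?] [[|[|[|[|[|?]]]]] ?] //= *; apply: val_inj.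
by move=> [[|[|[|[|[|?]]]]] ?] [[|[|[|[|[|?]]]]] ?] //=; rewrite ?lexx ?h1 ?h2 ?h3 ?h4 ?n1 ?n2 ?n3 ?n4 ?n5 ?n6 ?n7 ?n8 ?n9 ?n10 ?n11 ?n12 ?n13 ?n14 ?n15 ?n16.
Qed.

Lemma nle_max J (m m' : P) z : maxin J m -> maxin J m' -> m != m' -> z <= m' -> ~~ (m <= z).
Proof.
move=> hm hm' ne zm'; apply/negP => mz.
have := maxinP hm (maxin_in hm') (le_trans mz zm').
by move=> e; move: ne; rewrite e eqxx.
Qed.

Lemma path3 J (e g i f h : P) : maxin J e -> maxin J g -> maxin J i ->
  e != g -> g != i -> e != i -> f <= e -> f <= g -> h <= g -> h <= i ->
  induced_subposet leP2 P \/ induced_subposet leP3 P.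
Proof.
move=> me mg mi neg ngi nei fe fg hg hi.
have gne : g != e by rewrite eq_sym.
have ing : i != g by rewrite eq_sym.
have ine : i != e by rewrite eq_sym.
case: (boolP (f <= i)) => fi.
  right; apply: (mk3 fe fg fi).
  all: try (first [by apply: (nle_max (J:=J) (m':=e)); rewrite ?lexx | by apply: (nle_max (J:=J) (m':=g)); rewrite ?lexx | by apply: (nle_max (J:=J) (m':=i)); rewrite ?lexx]).
case: (boolP (h <= e)) => he.
  right; apply: (mk3 he hg hi).
  all: try (first [by apply: (nle_max (J:=J) (m':=e)); rewrite ?lexx | by apply: (nle_max (J:=J) (m':=g)); rewrite ?lexx | by apply: (nle_max (J:=J) (m':=i)); rewrite ?lexx]).
left; apply: (mk2 fe fg hg hi) => //.
all: try (first [by apply: (nle_max (J:=J) (m':=e)); rewrite ?lexx | by apply: (nle_max (J:=J) (m':=g)); rewrite ?lexx | by apply: (nle_max (J:=J) (m':=i)); rewrite ?lexx]).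
- by apply/negP => fh; move: fi; rewrite (le_trans fh hi).
- by apply/negP => hf; move: he; rewrite (le_trans hf fe).
Qed.


Lemma dset_sub J (S : {set P}) : order_ideal J -> S \subset J -> dset S \subset J.
Proof.
move=> iJ /subsetP sS; apply/subsetP => z; rewrite inE => /exists_inP[s sS' zs].
exact: idealP (sS _ sS') zs.
Qed.

Lemma notin_dset (S : {set P}) y : (forall s, s \in S -> ~~ (y <= s)) -> y \notin dset S.
Proof.
move=> H; rewrite inE; apply/negP => /exists_inP[s sS ys].
by move: (H s sS); rewrite ys.
Qed.

Section Free.
Hypothesis np2 : ~ induced_subposet leP2 P.
Hypothesis np3 : ~ induced_subposet leP3 P.

Lemma no_three J m1 m2 m3 : J \in Jconn -> maxin J m1 -> maxin J m2 -> maxin J m3 ->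
  m1 != m2 -> m1 != m3 -> m2 != m3 -> False.
Proof.
move=> JJ h1 h2 h3 n12 n13 n23.
have /JconnP[_ iJ _] := JJ.
have mx : forall a b, maxin J a -> maxin J b -> a != b -> ~~ (a <= b).
  by move=> a b ha hb nab; apply: (nle_max ha hb nab); rewrite lexx.
have m1D : m1 \in dset [set m1] by rewrite dset1 inE.
case: (cross_max (U := dset [set m1]) (x := m1) (y := m2) JJ _ (dset_down (S:=[set m1])) m1D (maxin_in h2)).
- by apply: dset_sub; rewrite // sub1set maxin_in.
- by apply: notin_dset => s; rewrite inE => /eqP ->; apply: mx; rewrite // eq_sym.
move=> u1 [a [u1S ma u1a aN]].
have na1 : a != m1 by apply/negP => /eqP e; move: aN; rewrite e m1D.
have u1m1 : u1 <= m1 by move: u1S; rewrite dset1 inE.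
have [y [my ny1 nya]] : exists y, [/\ maxin J y, y != m1 & y != a].
  case: (eqVneq a m2) => [e|ne].
    by exists m3; split => //; rewrite ?e eq_sym.
  by exists m2; split => //; rewrite eq_sym.
have m1D2 : m1 \in dset [set m1; a].
  by rewrite inE; apply/exists_inP; exists m1; rewrite ?inE ?eqxx.
have aD2 : a \in dset [set m1; a].
  by rewrite inE; apply/exists_inP; exists a; rewrite ?inE ?eqxx ?orbT.
case: (cross_max (U := dset [set m1; a]) (x := m1) (y := y) JJ _ (dset_down (S:=[set m1; a])) m1D2 (maxin_in my)).
- apply: dset_sub => //; apply/subsetP => s; rewrite !inE => /orP[/eqP->|/eqP->];
  exact: maxin_in.
- apply: notin_dset => s; rewrite !inE => /orP[/eqP->|/eqP->]; exact: mx.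
move=> u2 [b [u2S mb u2b bN]].
have nb1 : b != m1 by apply/negP => /eqP e; move: bN; rewrite e m1D2.
have nba : b != a by apply/negP => /eqP e; move: bN; rewrite e aD2.
move: u2S; rewrite inE => /exists_inP[s]; rewrite !inE => /orP[/eqP->|/eqP->] u2s.
- by case: (path3 (J:=J) (e:=a) (g:=m1) (i:=b) (f:=u1) (h:=u2)) => //;
    rewrite eq_sym.
- by case: (path3 (J:=J) (e:=m1) (g:=a) (i:=b) (f:=u1) (h:=u2)) => //;
    rewrite eq_sym.
Qed.

Lemma meet2 J m1 m2 : J \in Jconn -> maxin J m1 -> maxin J m2 -> m1 != m2 ->
  exists2 x, x <= m1 & x <= m2.
Proof.
move=> JJ h1 h2 n12.
have /JconnP[_ iJ _] := JJ.
have m1D : m1 \in dset [set m1] by rewrite dset1 inE.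
case: (cross_max (U := dset [set m1]) (x := m1) (y := m2) JJ _ (dset_down (S:=[set m1])) m1D (maxin_in h2)).
- by apply: dset_sub; rewrite // sub1set maxin_in.
- apply: notin_dset => s; rewrite inE => /eqP ->.
  by apply: (nle_max h2 h1); rewrite ?lexx // eq_sym.
move=> u [m [uS mm um mN]].
have nm1 : m != m1 by apply/negP => /eqP e; move: mN; rewrite e m1D.
have u1 : u <= m1 by move: uS; rewrite dset1 inE.
case: (eqVneq m m2) => [e|ne]; first by exists u; rewrite -?e.
by case: (no_three JJ h1 h2 mm n12 _ _); rewrite // eq_sym.
Qed.

Lemma maxin_sub A J m : A \subset J -> m \in A -> maxin J m -> maxin A m.
Proof.
move=> /subsetP sAJ mA hm; rewrite /maxin mA; apply/forall_inP => z zA.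
by apply/implyP => mz; rewrite (maxinP hm (sAJ _ zA) mz).
Qed.

Hypothesis np1 : ~ induced_subposet leP1 P.

Lemma keyA A B m : A \in Jconn -> B \in Jconn -> intersect_nontrivially A B ->
  maxin (A :|: B) m -> m \in A -> A = down m.
Proof.
move=> AJ BJ /and3P[nd nAB nBA] hm mA.
have JJ := Jconn_union AJ BJ nd.
have /JconnP[_ iA _] := AJ.
have /JconnP[_ iJ _] := JJ.
have sAJ : A \subset A :|: B by apply: subsetUl.
apply/setP => y; rewrite inE; apply/idP/idP => [yA|ym]; last exact: idealP mA ym.
apply/negPn/negP => nym.
case/subsetPn: nBA => z zB zA.
have zJ : z \in A :|: B by rewrite inE zB orbT.
case: (exists_max zJ) => m2 /andP[hm2 zm2].
have m2A : m2 \notin A by apply/negP => m2A; move: zA; rewrite (idealP iA m2A zm2).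
have n2 : m2 != m by apply/negP => /eqP e; move: m2A; rewrite e mA.
case: (exists_max yA) => y' /andP[hy' yy'].
have ny' : y' != m by apply/negP => /eqP e; move: nym; rewrite -e yy'.
have y'A := maxin_in hy'.
have y'J : y' \in A :|: B by rewrite inE y'A.
have nmy : m != y' by rewrite eq_sym.
case: (meet2 AJ (maxin_sub sAJ mA hm) hy' nmy) => x xm xy'.
case: (exists_max y'J) => m3 /andP[hm3 y'm3].
have y'm2 : y' <= m2.
  case: (eqVneq m3 m) => [e|n3]; first by move: nym; rewrite (le_trans yy') // -e.
  case: (eqVneq m3 m2) => [<- //|n32].
  by case: (no_three JJ hm hm2 hm3 _ _ _); rewrite // eq_sym.
have ny'2 : y' != m2 by apply/negP => /eqP e; move: m2A; rewrite -e y'A.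
apply: np1; apply: (mk1 (a := m2) (b := y') (c := x) (d := m)) => //.
- exact: le_trans xy' y'm2.
- apply/negP => m2y'; move: ny'2; rewrite (maxinP hm2 y'J m2y') eqxx //.
- apply/negP => m2x; move: ny'2; rewrite (maxinP hm2 y'J (le_trans m2x xy')) eqxx //.
- by apply: (nle_max hm2 hm n2); rewrite lexx.
- by apply/negP => y'x; move: nym; rewrite (le_trans yy' (le_trans y'x xm)).
- by apply/negP => y'm; move: nym; rewrite (le_trans yy' y'm).
- by apply: (nle_max hm hm2); rewrite 1?eq_sym ?lexx.
- by apply: (nle_max hm hm2); rewrite 1?eq_sym.
- by apply: (nle_max hm hm2); rewrite 1?eq_sym // (le_trans xy' y'm2).
Qed.

Lemma pi_form p : p \in Pi -> p = down @: [set m | maxin (un p) m].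
Proof.
case/PiP => A [B [AJ BJ H ->]]; rewrite un2.
have H' : intersect_nontrivially B A.
  by move: H => /and3P[nd n1 n2]; apply/and3P; split => //; rewrite disjoint_sym.
have /JconnP[_ iA _] := AJ; have /JconnP[_ iB _] := BJ.
move: (H) => /and3P[nd nAB nBA].
have JJ := Jconn_union AJ BJ nd.
case/subsetPn: (nAB) => a aA aB.
have aJ : a \in A :|: B by rewrite inE aA.
case: (exists_max aJ) => m /andP[hm am].
have mA : m \in A.
  move: (maxin_in hm); rewrite inE => /orP[//|mB].
  by move: aB; rewrite (idealP iB mB am).
case/subsetPn: (nBA) => b bB bA.
have bJ : b \in A :|: B by rewrite inE bB orbT.
case: (exists_max bJ) => m' /andP[hm' bm'].
have m'B : m' \in B.
  move: (maxin_in hm'); rewrite inE => /orP[m'A|//].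
  by move: bA; rewrite (idealP iA m'A bm').
have eA := keyA AJ BJ H hm mA.
have eB : B = down m'.
  by apply: (keyA BJ AJ H'); rewrite // setUC.
have nmm : m != m'.
  by apply/negP => /eqP e; move: nAB; rewrite eA eB e subxx.
have -> : [set m0 | maxin (A :|: B) m0] = [set m; m'].
  apply/setP => z; rewrite !inE; apply/idP/idP => [hz|/orP[/eqP->|/eqP->] //].
  case: (eqVneq z m) => [//|nzm]; case: (eqVneq z m') => [//|nzm'].
  by case: (no_three JJ hm hm' hz nmm _ _); rewrite // eq_sym.
by rewrite imsetU1 imset_set1 -eA -eB.
Qed.

End Free.
Definition bad := exists p q, [/\ p \in @Pi _ P, q \in @Pi _ P, p != q & un p = un q].

Lemma pat3_bad : induced_subposet leP3 P -> bad.
Proof.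
case=> f [_ Hf].
pose x := f (@Ordinal 4 0 isT); pose y1 := f (@Ordinal 4 1 isT);
pose y2 := f (@Ordinal 4 2 isT); pose y3 := f (@Ordinal 4 3 isT).
have l1 : x <= y1 by rewrite Hf.
have l2 : x <= y2 by rewrite Hf.
have l3 : x <= y3 by rewrite Hf.
have n12 : ~~ (y1 <= y2) by rewrite Hf.
have n13 : ~~ (y1 <= y3) by rewrite Hf.
have n21 : ~~ (y2 <= y1) by rewrite Hf.
have n23 : ~~ (y2 <= y3) by rewrite Hf.
have n31 : ~~ (y3 <= y1) by rewrite Hf.
have n32 : ~~ (y3 <= y2) by rewrite Hf.
have U12 : down y1 :|: down y2 \in Jconn.
  by apply: Jconn_union; rewrite ?Jconn_down //; apply: (nondisj (x := x)); rewrite inE.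
have U13 : down y1 :|: down y3 \in Jconn.
  by apply: Jconn_union; rewrite ?Jconn_down //; apply: (nondisj (x := x)); rewrite inE.
exists [set down y1 :|: down y2; down y3], [set down y1 :|: down y3; down y2]; split.
- apply/PiP; exists (down y1 :|: down y2), (down y3); split; rewrite ?Jconn_down //.
  apply/and3P; split.
  + by apply: (nondisj (x := x)); rewrite !inE ?l1.
  + by apply: (nsub (x := y1)); rewrite !inE ?lexx.
  + by apply: (nsub (x := y3)); rewrite !inE ?lexx // negb_or n31.
- apply/PiP; exists (down y1 :|: down y3), (down y2); split; rewrite ?Jconn_down //.
  apply/and3P; split.
  + by apply: (nondisj (x := x)); rewrite !inE ?l1.
  + by apply: (nsub (x := y1)); rewrite !inE ?lexx.
  + by apply: (nsub (x := y2)); rewrite !inE ?lexx // negb_or n21.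
- apply/negP => /eqP e.
  have : down y3 \in [set down y1 :|: down y3; down y2] by rewrite -e !inE eqxx orbT.
  rewrite !inE => /orP[/eqP e'|/eqP e'].
    have : y1 \in down y3 by rewrite e' !inE lexx.
    by rewrite inE (negbTE n13).
  have : y3 \in down y2 by rewrite -e' !inE lexx.
  by rewrite inE (negbTE n32).
- by rewrite !un2 setUAC.
Qed.

Lemma pat1_bad : induced_subposet leP1 P -> bad.
Proof.
case=> f [_ Hf].
pose a := f (@Ordinal 4 0 isT); pose b := f (@Ordinal 4 1 isT);
pose c := f (@Ordinal 4 2 isT); pose d := f (@Ordinal 4 3 isT).
have cb : c <= b by rewrite Hf.
have ca : c <= a by rewrite Hf.
have ba : b <= a by rewrite Hf.
have cd : c <= d by rewrite Hf.
have nab : ~~ (a <= b) by rewrite Hf.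
have nad : ~~ (a <= d) by rewrite Hf.
have nbd : ~~ (b <= d) by rewrite Hf.
have nda : ~~ (d <= a) by rewrite Hf.
have Ubd : down b :|: down d \in Jconn.
  by apply: Jconn_union; rewrite ?Jconn_down //; apply: (nondisj (x := c)); rewrite inE.
exists [set down a; down d], [set down a; down b :|: down d]; split.
- apply/PiP; exists (down a), (down d); split; rewrite ?Jconn_down //.
  apply/and3P; split.
  + by apply: (nondisj (x := c)); rewrite !inE.
  + by apply: (nsub (x := a)); rewrite !inE ?lexx.
  + by apply: (nsub (x := d)); rewrite !inE ?lexx.
- apply/PiP; exists (down a), (down b :|: down d); split; rewrite ?Jconn_down //.
  apply/and3P; split.
  + by apply: (nondisj (x := c)); rewrite !inE ?ca ?cb.
  + by apply: (nsub (x := a)); rewrite !inE ?lexx // negb_or nab.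
  + by apply: (nsub (x := d)); rewrite !inE ?lexx ?orbT.
- apply/negP => /eqP e.
  have : down d \in [set down a; down b :|: down d] by rewrite -e !inE eqxx orbT.
  rewrite !inE => /orP[/eqP e'|/eqP e'].
    have : a \in down d by rewrite e' !inE lexx.
    by rewrite inE (negbTE nad).
  have : b \in down d by rewrite e' !inE lexx.
  by rewrite inE (negbTE nbd).
- rewrite !un2; apply/setP => z; rewrite !inE.
  by case: (boolP (z <= b)) => zb; rewrite ?orbF // (le_trans zb ba).
Qed.

Lemma pat2_bad : induced_subposet leP2 P -> bad.
Proof.
case=> F [_ Hf].
pose e := F (@Ordinal 5 0 isT); pose f := F (@Ordinal 5 1 isT);
pose g := F (@Ordinal 5 2 isT); pose h := F (@Ordinal 5 3 isT);
pose i := F (@Ordinal 5 4 isT).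
have fe : f <= e by rewrite Hf.
have fg : f <= g by rewrite Hf.
have hg : h <= g by rewrite Hf.
have hi : h <= i by rewrite Hf.
have neg : ~~ (e <= g) by rewrite Hf.
have nei : ~~ (e <= i) by rewrite Hf.
have nge : ~~ (g <= e) by rewrite Hf.
have nie : ~~ (i <= e) by rewrite Hf.
have nig : ~~ (i <= g) by rewrite Hf.
have Ueg : down e :|: down g \in Jconn.
  by apply: Jconn_union; rewrite ?Jconn_down //; apply: (nondisj (x := f)); rewrite inE.
have Ugi : down g :|: down i \in Jconn.
  by apply: Jconn_union; rewrite ?Jconn_down //; apply: (nondisj (x := h)); rewrite inE.
exists [set down e :|: down g; down g :|: down i], [set down e; down g :|: down i]; split.
- apply/PiP; exists (down e :|: down g), (down g :|: down i); split => //.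
  apply/and3P; split.
  + by apply: (nondisj (x := g)); rewrite !inE ?lexx ?orbT.
  + by apply: (nsub (x := e)); rewrite !inE ?lexx // negb_or neg.
  + by apply: (nsub (x := i)); rewrite !inE ?lexx ?orbT // negb_or nie.
- apply/PiP; exists (down e), (down g :|: down i); split; rewrite ?Jconn_down //.
  apply/and3P; split.
  + by apply: (nondisj (x := f)); rewrite !inE ?fe ?fg.
  + by apply: (nsub (x := e)); rewrite !inE ?lexx // negb_or neg.
  + by apply: (nsub (x := g)); rewrite !inE ?lexx.
- apply/negP => /eqP E.
  have : down e :|: down g \in [set down e; down g :|: down i] by rewrite -E !inE eqxx.
  rewrite !inE => /orP[/eqP e'|/eqP e'].
    have : g \in down e by rewrite -e' !inE lexx orbT.
    by rewrite inE (negbTE nge).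
  have : e \in down g :|: down i by rewrite -e' !inE lexx.
  by rewrite !inE (negbTE neg) (negbTE nei).
- rewrite !un2; apply/setP => z; rewrite !inE.
  by case: (z <= e); case: (z <= g); case: (z <= i).
Qed.

End S.

Lemma ciE (disp : Order.disp_t) (P : finPOrderType disp) :
  ci_poset P <-> #|@Jconn _ P| = (#|P| + #|@Pi _ P|)%N.
Proof.
rewrite /ci_poset; split => [/eqP|->].
  by rewrite GRing.subr_eq -PoszD => /eqP [->].
by rewrite PoszD GRing.addrK.
Qed.

Unset Implicit Arguments.
Local Close Scope order_scope.

Theorem theorem10p5 (disp : Order.disp_t) (P : finPOrderType disp) :
  ci_poset P <->
  [/\ ~ induced_subposet leP1 P, ~ induced_subposet leP2 P
    & ~ induced_subposet leP3 P].
Proof.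
split.
  move=> /ciE; rewrite card_Jconn -unPi => H.
  have nb : ~ @bad _ P.
    case=> p [q [pP qP npq e]].
    have : #|un @: @Pi _ P| != #|@Pi _ P|.
      by apply/negP => /imset_injP inj; move: npq; rewrite (inj p q pP qP e) eqxx.
    move=> ne; have lt : (#|un @: @Pi _ P| < #|@Pi _ P|)%N.
      by rewrite ltn_neqAle ne leq_imset_card.
    by move: H => /eqP; rewrite eqn_add2l => /eqP e'; move: lt; rewrite e' ltnn.
  split => hp; apply: nb.
  - exact: pat1_bad.
  - exact: pat2_bad.
  - exact: pat3_bad.
case=> n1 n2 n3; apply/ciE; rewrite card_Jconn -unPi; congr (_ + _)%N.
apply: card_in_imset => p q pP qP e.
by rewrite (pi_form n2 n3 n1 pP) (pi_form n2 n3 n1 qP) e.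
Qed.
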